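(* Let $\mu>0$, $\ell_S>0$, let $\Delta$ be a positive integer, and set $a_S=\ell_S/\mu$, \[ \rho_S=\sqrt{1-\frac{2}{\sqrt{1+\Delta a_S}+1}},\qquad \lambda_S=\begin{cases}\frac{\Delta a_S}{3+3\Delta a_S}&\text{if }\Delta a_S<48,\\[2pt]\max\Big(\frac{\Delta a_S}{3+3\Delta a_S},\ \big(1-4\sqrt3(\Delta a_S)^{-1/2}\big)^2\Big)&\text{otherwise.}\end{cases} \] Then $\rho_S^{32}\le\lambda_S$. *)

(* Defs.v *)
From Stdlib Require Import Reals.
Open Scope R_scope.

Definition rho_S (Delta : nat) (mu lS : R) : R :=
  let aS := lS / mu in
  sqrt (1 - 2 / (sqrt (1 + INR Delta * aS) + 1)).

Definition lambda_S (Delta : nat) (mu lS : R) : R :=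
  let aS := lS / mu in
  let x := INR Delta * aS in
  if Rlt_dec x 48 then x / (3 + 3 * x)
  else Rmax (x / (3 + 3 * x)) ((1 - 4 * sqrt 3 * / sqrt x) ^ 2).

(* Main.v *)
Require Import Defs.
From Stdlib Require Import Reals Lra Lia Psatz.
Open Scope R_scope.

Lemma bern_aux (a : R) (n : nat) : 0 <= a <= 1 -> (1 - a) ^ n * (1 + INR n * a) <= 1.
Proof.
  intros Ha. induction n as [|n IH].
  - simpl. lra.
  - rewrite S_INR. simpl.
    assert (H0 : 0 <= (1 - a) ^ n) by (apply pow_le; lra).
    assert (Hn : 0 <= INR n) by apply pos_INR.
    assert (E : (1 - a) * (1 - a) ^ n * (1 + (INR n + 1) * a)
              = (1 - a) ^ n * (1 + INR n * a) - (1 - a) ^ n * ((INR n + 1) * a * a)) by ring.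
    rewrite E.
    assert (0 <= (1 - a) ^ n * ((INR n + 1) * a * a)).
    { apply Rmult_le_pos; [lra|]. apply Rmult_le_pos; [apply Rmult_le_pos|]; lra. }
    lra.
Qed.

Theorem lemmaG2 (mu lS : R) (Delta : nat) :
  0 < mu -> 0 < lS -> (0 < Delta)%nat ->
  rho_S Delta mu lS ^ 32 <= lambda_S Delta mu lS.
Proof.
  intros Hmu HlS HD.
  unfold rho_S, lambda_S.
  set (x := INR Delta * (lS / mu)).
  assert (Hx : 0 < x).
  { unfold x. apply Rmult_lt_0_compat.
    - apply lt_0_INR; lia.
    - apply Rdiv_lt_0_compat; lra. }
  set (s := sqrt (1 + x)).
  assert (Hs2 : s * s = 1 + x) by (unfold s; apply sqrt_sqrt; lra).
  assert (Hs0 : 0 <= s) by (unfold s; apply sqrt_pos).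
  assert (Hs1 : 1 < s) by nra.
  set (t := 1 - 2 / (s + 1)).
  assert (Ht : t = (s - 1) / (s + 1)) by (unfold t; field; lra).
  assert (Ht0 : 0 <= t) by (rewrite Ht; apply Rle_mult_inv_pos; lra).
  assert (Ht1 : t < 1) by (rewrite Ht; apply Rmult_lt_reg_r with (s + 1); [lra|]; unfold Rdiv; rewrite Rmult_assoc, Rinv_l; lra).
  assert (Hr : sqrt t ^ 32 = t ^ 16).
  { replace 32%nat with (2 * 16)%nat by reflexivity.
    rewrite pow_mult. f_equal. simpl. rewrite Rmult_1_r. apply sqrt_sqrt. lra. }
  rewrite Hr.
  assert (Hp0 : forall n, 0 <= t ^ n) by (intro; apply pow_le; lra).
  destruct (Rle_dec s 20) as [Hsl | Hsl].
  -
    assert (Htc : t <= 19/21).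
    { rewrite Ht. apply Rmult_le_reg_r with (s + 1); [lra|].
      unfold Rdiv. rewrite Rmult_assoc, Rinv_l; lra. }
    assert (H15 : t ^ 15 <= (19/21) ^ 15) by (apply pow_incr; lra).
    assert (Hc : (19/21) ^ 15 <= 1/3) by (simpl; lra).
    assert (Hmain : t ^ 16 <= x / (3 + 3 * x)).
    { replace (t ^ 16) with (t * t ^ 15) by (simpl; ring).
      apply Rle_trans with (t * (1/3)).
      { apply Rmult_le_compat_l; lra. }
      rewrite Ht.
      replace x with ((s - 1) * (s + 1)) by nra.
      apply Rmult_le_reg_r with (3 * (s + 1) * (1 + (s - 1) * (s + 1))).
      { nra. }
      replace ((s - 1) / (s + 1) * (1 / 3) * (3 * (s + 1) * (1 + (s - 1) * (s + 1))))
        with ((s - 1) * (1 + (s - 1) * (s + 1))) by (field; lra).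
      replace ((s - 1) * (s + 1) / (3 + 3 * ((s - 1) * (s + 1))) *
               (3 * (s + 1) * (1 + (s - 1) * (s + 1))))
        with ((s - 1) * (s + 1) * (s + 1)).
      2:{ field. nra. }
      nra. }
    destruct (Rlt_dec x 48); [exact Hmain|].
    apply Rle_trans with (1 := Hmain). apply Rmax_l.
  - assert (Hs20 : 20 < s) by lra.
    destruct (Rlt_dec x 48) as [Hx48|Hx48]; [nra|].
    apply Rle_trans with (2 := Rmax_r _ _).
    set (w := sqrt x).
    assert (Hw2 : w * w = x) by (unfold w; apply sqrt_sqrt; lra).
    assert (Hw0 : 0 < w) by (unfold w; apply sqrt_lt_R0; lra).
    set (r := sqrt 3).
    assert (Hr2 : r * r = 3) by (unfold r; apply sqrt_sqrt; lra).
    assert (Hr0 : 0 < r) by (unfold r; apply sqrt_lt_R0; lra).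
    assert (Hb : t ^ 8 * (1 + 8 * (1 - t)) <= 1).
    { pose proof (bern_aux (1 - t) 8 ltac:(lra)) as B.
      replace (INR 8) with 8 in B by (simpl; ring).
      replace (1 - (1 - t)) with t in B by ring. exact B. }
    assert (H1t : 1 - t = 2 / (s + 1)) by (unfold t; ring).
    assert (Hq : 4 * r * (s + 17) <= 16 * w).
    { assert (Hsq : (4 * r * (s + 17)) * (4 * r * (s + 17)) <= (16 * w) * (16 * w)).
      { replace ((4 * r * (s + 17)) * (4 * r * (s + 17))) with (16 * (r * r) * ((s+17)*(s+17))) by ring.
        replace ((16 * w) * (16 * w)) with (256 * (w * w)) by ring.
        rewrite Hr2, Hw2. nra. }
      nra. }
    assert (Hq2 : 4 * r * / w <= 16 / (s + 17)).
    { apply Rmult_le_reg_r with (w * (s + 17)); [nra|].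
      replace (4 * r * / w * (w * (s + 17))) with (4 * r * (s + 17)) by (field; lra).
      replace (16 / (s + 17) * (w * (s + 17))) with (16 * w) by (field; lra).
      exact Hq. }
    assert (Ht8 : t ^ 8 <= 1 - 4 * r * / w).
    { apply Rle_trans with (1 - 16 / (s + 17)); [|lra].
      rewrite H1t in Hb.
      assert (E : 1 - 16 / (s + 17) = (s + 1) / (s + 17)) by (field; lra).
      rewrite E.
      apply Rmult_le_reg_r with ((s + 17) / (s + 1)).
      { apply Rdiv_lt_0_compat; lra. }
      replace ((s + 1) / (s + 17) * ((s + 17) / (s + 1))) with 1 by (field; lra).
      replace ((s + 17) / (s + 1)) with (1 + 8 * (2 / (s + 1))) by (field; lra).
      exact Hb. }
    assert (Hq0 : 0 <= t ^ 8) by apply Hp0.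
    replace (t ^ 16) with ((t ^ 8) ^ 2) by (rewrite <- pow_mult; reflexivity).
    apply pow_incr. lra.
Qed.
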